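(* Let $n\ge 3$ be odd. Then $K^*_n$ has a rotationally symmetric (r.s.) nomadic near-Hamiltonian decomposition: there is a partition of the arc set of $K^*_n$ (with vertex set $\mathbb{Z}_n$) into $n$ directed cycles $C_1,\dots,C_n$, each of length $n-1$, together with a choice of root vertex $v_i$ on each $C_i$, such that, writing $g_i(t)=v_i^{+t}$ for the position of the nomad on $C_i$ at time $t$, for every pair $i\neq j$ there is a constant $c_{ij}\not\equiv 0 \pmod n$ with $g_i(t)-g_j(t)\equiv c_{ij}\pmod n$ for all integers $t\ge 0$. In particular $v_i^{+t}\neq v_j^{+t}$ for all $i\ne j$ and all $t\ge 0$. *)

(* Defs.v *)
From HB Require Import structures.
From mathcomp Require Import all_boot all_order all_algebra.
Set Implicit Arguments. Unset Strict Implicit. Unset Printing Implicit Defensive.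
Import GRing.Theory.
Local Open Scope ring_scope.

(* A directed cycle of the digraph on vertex set 'Z_n is represented by the
   sequence of its vertices [:: v; v^{+1}; ...; v^{+(L-1)}] listed in the
   direction of the cycle, starting at its chosen root v (the head).  *)

Definition cyc_arc (n : nat) (c : seq 'Z_n) (k : nat) : 'Z_n * 'Z_n :=
  (nth 0 c k, nth 0 c ((k.+1) %% size c)%N).

Definition nomad (n : nat) (c : seq 'Z_n) (t : nat) : 'Z_n :=
  nth 0 c (t %% size c)%N.

Definition is_dcycle (n : nat) (L : nat) (c : seq 'Z_n) : Prop :=
  size c = L /\ (1 < L)%N /\ uniq c.

Definition arc_partition (n : nat) (C : 'I_n -> seq 'Z_n) : Prop :=
  forall u v : 'Z_n, u != v ->
    exists! p : 'I_n * nat,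
      (p.2 < size (C p.1))%N /\ cyc_arc (C p.1) p.2 = (u, v).

Definition rot_symmetric (n : nat) (C : 'I_n -> seq 'Z_n) : Prop :=
  forall i : 'I_n, exists j : 'I_n, exists r : nat,
    C j = rot r [seq x + 1 | x <- C i].

Definition nomadic (n : nat) (C : 'I_n -> seq 'Z_n) : Prop :=
  forall i j : 'I_n, i != j ->
    exists c : 'Z_n, c != 0 /\
      forall t : nat, nomad (C i) t - nomad (C j) t = c.

(* Main.v *)
From HB Require Import structures.
From mathcomp Require Import all_boot all_order all_algebra.
From mathcomp Require Import zify ring.
Require Import Defs.
Set Implicit Arguments. Unset Strict Implicit.

Definition xv (m : nat) (k : nat) : nat :=
  if odd k then (if (k.+1)./2 <= m./2 then (k.+1)./2 else ((k.+1)./2).+1)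
  else (if k./2 == 0 then 0 else m.*2.+1 - k./2).

Definition dv (m : nat) (k : nat) : nat :=
  if odd k then
    (if (k.+1)./2 == m then m
     else if (k.+1)./2 <= m./2 then m.*2.+1 - ((k.+1)./2).*2
     else m.*2 - ((k.+1)./2).*2)
  else (if (k./2).+1 <= m./2 then ((k./2).+1).*2 - 1 else ((k./2).+1).*2).

Lemma xv_lt m k : 0 < m -> k < m.*2 -> xv m k < m.*2.+1.
Proof. move=> hm hk; rewrite /xv; repeat case: ifP => ?; lia. Qed.

Lemma xv_inj m k1 k2 : 0 < m -> k1 < m.*2 -> k2 < m.*2 -> xv m k1 = xv m k2 -> k1 = k2.
Proof. move=> hm h1 h2; rewrite /xv; repeat case: ifP => ?; lia. Qed.

Lemma dv_range m k : 0 < m -> k < m.*2 -> 0 < dv m k < m.*2.+1.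
Proof. move=> hm hk; rewrite /dv; repeat case: ifP => ?; lia. Qed.

Lemma dv_inj m k1 k2 : 0 < m -> k1 < m.*2 -> k2 < m.*2 -> dv m k1 = dv m k2 -> k1 = k2.
Proof. move=> hm h1 h2; rewrite /dv; repeat case: ifP => ?; lia. Qed.

Lemma step_small m k : 0 < m -> k.+1 < m.*2 -> xv m k + dv m k = xv m k.+1 \/ xv m k + dv m k = xv m k.+1 + m.*2.+1.
Proof. move=> hm hk; rewrite /xv /dv; repeat case: ifP => ?; lia. Qed.

Lemma step_last m : 0 < m -> xv m (m.*2 - 1) + dv m (m.*2 - 1) = m.*2.+1.
Proof. move=> hm; rewrite /xv /dv; repeat case: ifP => ?; lia. Qed.
Import GRing.Theory.
Local Open Scope ring_scope.

Lemma xv_lt' m' k : (k < (m'.+1).*2)%N -> (xv m'.+1 k < m'.*2.+3)%N.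
Proof. move=> hk; have := @xv_lt m'.+1 k isT hk; lia. Qed.

Fact base_key : unit. Proof. exact: tt. Qed.
Definition base (m' : nat) : seq 'Z_(m'.*2.+3) :=
  locked_with base_key (mkseq (fun k => (xv m'.+1 k)%:R) (m'.+1).*2).

Arguments base : simpl never.

Lemma size_base m' : size (base m') = (m'.+1).*2.
Proof. by rewrite /base unlock size_mkseq. Qed.

Lemma nth_base m' k : (k < (m'.+1).*2)%N -> nth 0 (base m') k = (xv m'.+1 k)%:R.
Proof. by move=> hk; rewrite /base unlock nth_mkseq. Qed.

Lemma valZ m' a : val (a%:R : 'Z_(m'.*2.+3)) = (a %% m'.*2.+3)%N.
Proof. exact: (@val_Zp_nat (m'.*2.+3) isT a). Qed.

Lemma uniq_base m' : uniq (base m').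
Proof.
rewrite /base unlock /mkseq map_inj_in_uniq ?iota_uniq // => k1 k2.
rewrite !mem_iota !add0n => h1 h2 /(congr1 val); rewrite !valZ !modn_small ?xv_lt' //.
by apply: xv_inj.
Qed.

Lemma NZ0 m' : ((m'.*2.+3)%:R : 'Z_(m'.*2.+3)) = 0.
Proof. by apply: val_inj; rewrite valZ modnn. Qed.

Lemma step_base m' k : (k < (m'.+1).*2)%N ->
  nth 0 (base m') ((k.+1) %% (m'.+1).*2) = nth 0 (base m') k + (dv m'.+1 k)%:R.
Proof.
move=> hk; have hm : (0 < m'.+1)%N by [].
rewrite (nth_base hk) -natrD.
have [hlt|hge] := ltnP k.+1 (m'.+1).*2.
  rewrite modn_small // (nth_base hlt).
  have [->|->] := step_small hm hlt => //.
  have -> : (m'.+1).*2.+1 = m'.*2.+3 by lia.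
  by rewrite natrD NZ0 addr0.
have ek : k = ((m'.+1).*2 - 1)%N by lia.
have -> : k.+1 = (m'.+1).*2 by lia.
rewrite modnn (nth_base (isT : (0 < (m'.+1).*2)%N)) ek step_last //.
have -> : (m'.+1).*2.+1 = m'.*2.+3 by lia.
by rewrite NZ0 /xv /=.
Qed.

Lemma dv_surj m' (w : 'Z_(m'.*2.+3)) : w != 0 ->
  exists k : 'I_((m'.+1).*2), (dv m'.+1 k)%:R = w.
Proof.
move=> hw.
pose f := fun k : 'I_((m'.+1).*2) => ((dv m'.+1 k)%:R : 'Z_(m'.*2.+3)).
have finj : injective f.
  move=> k1 k2 /(congr1 val); rewrite !valZ.
  have := @dv_range m'.+1 k1 isT (ltn_ord k1); have := @dv_range m'.+1 k2 isT (ltn_ord k2).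
  move=> r2 r1; rewrite !modn_small; [|lia|lia].
  move=> e; apply: val_inj; exact: (@dv_inj m'.+1 k1 k2 isT (ltn_ord k1) (ltn_ord k2) e).
have sub : f @: setT \subset [set~ (0 : 'Z_(m'.*2.+3))].
  apply/subsetP => _ /imsetP [k _ ->]; rewrite !inE.
  apply/eqP => /(congr1 val); rewrite valZ /=.
  move: (@dv_range m'.+1 k isT (ltn_ord k)) => r; rewrite modn_small; lia.
have eq : f @: setT = [set~ (0 : 'Z_(m'.*2.+3))].
  apply/eqP; rewrite eqEcard sub /= cardsC1 card_imset // cardsT !card_ord.
  rewrite (Zp_cast (isT : (1 < m'.*2.+3)%N)); lia.
have : w \in f @: setT by rewrite eq !inE.
by case/imsetP => k _ ->; exists k.
Qed.

Definition shift m' (i : 'Z_(m'.*2.+3)) (y : 'Z_(m'.*2.+3)) : 'Z_(m'.*2.+3) := y + i.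

Lemma size_C m' i : size (map (@shift m' i) (base m')) = (m'.+1).*2.
Proof. by rewrite size_map size_base. Qed.

Lemma nth_C m' i k : (k < (m'.+1).*2)%N ->
  nth 0 (map (@shift m' i) (base m')) k = nth 0 (base m') k + i.
Proof. by move=> hk; rewrite (nth_map 0) // size_base. Qed.

Lemma size_base2 m' : @size (ordinal (Zp_trunc (m'.*2.+3)).+2) (base m') = (m'.+1).*2.
Proof. exact: size_base. Qed.

Lemma size_base3 m' : @size (ordinal (m'.*2.+3)) (base m') = (m'.+1).*2.
Proof. exact: size_base. Qed.

Lemma lt_size_base m' k : (k < (m'.+1).*2)%N -> (k < size (base m'))%N.
Proof. by rewrite size_base. Qed.

Lemma main_thm (m' : nat) :
  exists C : 'I_(m'.*2.+3) -> seq 'Z_(m'.*2.+3),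
    (forall i, is_dcycle (m'.*2.+3).-1 (C i)) /\
    arc_partition C /\
    rot_symmetric C /\
    nomadic C.
Proof.
exists (fun i : 'I_(m'.*2.+3) => map (@shift m' i) (base m')).
split; [|split; [|split]].
- move=> i; rewrite /is_dcycle size_map size_base; split; first lia.
  split; first lia.
  by rewrite map_inj_uniq ?uniq_base // => a b /addIr.
- move=> u v huv.
  have hw : v - u != 0 by rewrite subr_eq0 eq_sym.
  have [k hk] := dv_surj hw.
  exists ((u - nth 0 (base m') k : 'Z_(m'.*2.+3)), val k); split.
    split; first by rewrite size_map size_base ltn_ord.
    rewrite /cyc_arc size_map size_base.
    rewrite (nth_map (0 : 'Z_(m'.*2.+3))); last by apply: lt_size_base; rewrite ltn_ord.
    rewrite (nth_map (0 : 'Z_(m'.*2.+3))); last by apply: lt_size_base; rewrite ltn_pmod.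
    rewrite /shift step_base ?ltn_ord // hk.
    congr (_, _); [by rewrite addrC subrK | by rewrite addrC addrA subrK addrC subrK].
  move=> [i' k'] []; rewrite [(i', k').1]/= [(i', k').2]/= => hk' [].
  rewrite size_map ?size_base ?size_base2 ?size_base3 in hk'.
  rewrite size_map ?size_base ?size_base2 ?size_base3.
  rewrite (nth_map (0 : 'Z_(m'.*2.+3))); last by apply: lt_size_base.
  rewrite (nth_map (0 : 'Z_(m'.*2.+3))); last by apply: lt_size_base; rewrite ltn_pmod.
  rewrite /shift step_base // => eu ev.
  have edk : ((dv m'.+1 k')%:R : 'Z_(m'.*2.+3)) = (dv m'.+1 k)%:R.
    rewrite hk -ev -eu; ring.
  have ek : k' = val k.
    move/(congr1 val): edk; rewrite !valZ.
    have := @dv_range m'.+1 k isT (ltn_ord k); have := @dv_range m'.+1 k' isT hk'.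
    move=> r2 r1; rewrite !modn_small; [|lia|lia].
    exact: (@dv_inj m'.+1 k' k isT hk' (ltn_ord k)).
  subst k'.
  congr (_, _).
  by rewrite -eu addrC addKr.
- move=> i; exists ((i : 'Z_(m'.*2.+3)) + 1); exists 0%N.
  rewrite rot0 -map_comp; apply: eq_map => y /=.
  by rewrite /shift addrA.
- move=> i j hij; exists ((i : 'Z_(m'.*2.+3)) - j); split.
    by rewrite subr_eq0.
  move=> t; rewrite /nomad !size_map !size_base.
  have ht : (t %% (m'.+1).*2 < (m'.+1).*2)%N by rewrite ltn_pmod.
  rewrite !(nth_map 0) ?size_base // /shift.
  by rewrite opprD addrACA subrr add0r.
Qed.

Theorem theorem1 (n : nat) (Hn : (3 <= n)%N) (Hodd : odd n) :
  exists C : 'I_n -> seq 'Z_n,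
    (forall i, is_dcycle n.-1 (C i)) /\
    arc_partition C /\
    rot_symmetric C /\
    nomadic C.
Proof.
have [m' ->] : exists m', n = m'.*2.+3 by exists (n./2).-1; lia.
exact: main_thm.
Qed.
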